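(* $\mathcal{L}_{\mathsf{SAFA_{init}}}$ and $\mathcal{L}_{\mathsf{KRFA}}$ are incomparable: there is a data language accepted by some SAFA with initialization but by no $k$-register automaton (for any $k$), and there is a data language accepted by some $k$-register automaton but by no SAFA with initialization.
   Context: $D$ is a fixed countably infinite set of data values; for a finite alphabet $\Sigma$, data languages are subsets of $(\Sigma\times D)^*$. A set augmented finite automaton (SAFA) is a tuple $M=(Q,\Sigma\times D,q_0,F,H,\delta)$: $Q$ finite set of states, $q_0\in Q$ initial, $F\subseteq Q$ final, $H=\{h_1,\dots,h_m\}$ a finite collection of (names of) sets of data values, $\delta\subseteq Q\times\Sigma\times C\times OP\times Q$ with $C=\{p(h_i),\,!p(h_i)\}$, $OP=\{-\}\cup\{\mathsf{ins}(h_i)\}$. Configurations are $(q,\langle S_1,\dots,S_m\rangle)$, $S_i\subseteq D$ finite. On reading $(a,d)$, a transition $(q,a,\alpha,op,q')$ from the current state may be taken if $\alpha=p(h_i)$ and $d\in S_i$, or $\alpha=\,!p(h_i)$ and $d\notin S_i$; then the state becomes $q'$ and if $op=\mathsf{ins}(h_j)$, $d$ is added to $S_j$. A word is accepted if some run reads it entirely and ends in $F$. In an ordinary SAFA all sets start empty; a SAFA with initialization additionally specifies initial contents (finite subsets of $D$) of the sets in $H$ before the computation starts. $\mathcal{L}_{\mathsf{SAFA_{init}}}$ is the class of data languages accepted by nondeterministic SAFA with initialization. A $k$-register automaton is a tuple $(Q,\Sigma,\delta,\tau_0,U,q_0,F)$ with finite state set $Q$, initial state $q_0$, final states $F$, initial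 register assignment $\tau_0:\{1,\dots,k\}\to D\cup\{\bot\}$ (non-$\bot$ values pairwise distinct), partial update function $U:Q\times\Sigma\to\{1,\dots,k\}$, and $\delta\subseteq Q\times\Sigma\times\{1,\dots,k\}\times Q$. Reading $(a,d)$ in state $q$: if $d$ equals the content of register $i$, a transition $(q,a,i,q')\in\delta$ is taken (halt if none); otherwise, if $U(q,a)$ is defined, $d$ is written into register $U(q,a)$ and a transition $(q,a,U(q,a),q')\in\delta$ is taken (halt if none or if $U(q,a)$ undefined). A word is accepted if entirely consumed ending in $F$. $\mathcal{L}_{\mathsf{KRFA}}$ is the class of languages accepted by $k$-register automata for some $k\ge 1$. *)

(* Defs.v *)
From mathcomp Require Import all_boot.
Set Implicit Arguments. Unset Strict Implicit. Unset Printing Implicit Defensive.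

Definition data_word (Sigma D : Type) := seq (Sigma * D).
Definition data_language (Sigma D : Type) := data_word Sigma D -> Prop.

Definition infinite_type (D : eqType) := forall s : seq D, exists d : D, d \notin s.

(* Sets are indexed by 'I_m (H = {h_0,...,h_(m-1)}).
   A condition is (true, i) for p(h_i) and (false, i) for !p(h_i).
   An operation is None for "-" and Some j for ins(h_j).  Set contents are finite, represented by
   sequences (only membership matters). *)
Record SAFA_init (Sigma : finType) (D : eqType) := {
  safa_Q : finType;
  safa_m : nat;
  safa_q0 : safa_Q;
  safa_F : pred safa_Q;
  safa_delta : safa_Q -> Sigma -> bool * 'I_safa_m -> option 'I_safa_m -> safa_Q -> bool;
  safa_init : 'I_safa_m -> seq D }.

Definition safa_cond_holds (D : eqType) m (S : 'I_m -> seq D)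
    (c : bool * 'I_m) (d : D) : bool :=
  if c.1 then d \in S c.2 else d \notin S c.2.

Definition safa_update (D : eqType) m (S : 'I_m -> seq D)
    (o : option 'I_m) (d : D) : 'I_m -> seq D :=
  match o with
  | None => S
  | Some j => fun i => if i == j then d :: S i else S i
  end.

Fixpoint safa_accepts_from (Sigma : finType) (D : eqType) (M : SAFA_init Sigma D)
    (q : safa_Q M) (S : 'I_(safa_m M) -> seq D) (w : data_word Sigma D) : Prop :=
  match w with
  | [::] => safa_F q
  | (a, d) :: w' =>
      exists (c : bool * 'I_(safa_m M)) (o : option 'I_(safa_m M)) (q' : safa_Q M),
        [/\ safa_delta q a c o q', safa_cond_holds S c d &
            @safa_accepts_from Sigma D M q' (safa_update S o d) w']
  end.

Definition safa_accepts (Sigma : finType) (D : eqType) (M : SAFA_init Sigma D)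
    (w : data_word Sigma D) : Prop :=
  @safa_accepts_from Sigma D M (safa_q0 M) (@safa_init _ _ M) w.

Definition in_L_SAFA_init (Sigma : finType) (D : eqType) (L : data_language Sigma D) : Prop :=
  exists M : SAFA_init Sigma D, forall w, L w <-> safa_accepts M w.

(* Registers are 'I_k; None plays the role of bot. *)
Record KRA (Sigma : finType) (D : eqType) (k : nat) := {
  kra_Q : finType;
  kra_delta : kra_Q -> Sigma -> 'I_k -> kra_Q -> bool;
  kra_tau0 : 'I_k -> option D;
  kra_U : kra_Q -> Sigma -> option 'I_k;
  kra_q0 : kra_Q;
  kra_F : pred kra_Q }.

Definition kra_wf (Sigma : finType) (D : eqType) k (A : KRA Sigma D k) : Prop :=
  forall i j : 'I_k, forall d : D,
    @kra_tau0 _ _ _ A i = Some d -> @kra_tau0 _ _ _ A j = Some d -> i = j.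

Definition reg_update (D : eqType) k (tau : 'I_k -> option D) (j : 'I_k) (d : D) :
    'I_k -> option D :=
  fun i => if i == j then Some d else tau i.

Fixpoint kra_accepts_from (Sigma : finType) (D : eqType) k (A : KRA Sigma D k)
    (q : kra_Q A) (tau : 'I_k -> option D) (w : data_word Sigma D) : Prop :=
  match w with
  | [::] => @kra_F _ _ _ A q
  | (a, d) :: w' =>
      (exists i : 'I_k, tau i = Some d /\
         exists q', @kra_delta _ _ _ A q a i q' /\ @kra_accepts_from Sigma D k A q' tau w')
      \/
      ((forall i : 'I_k, tau i <> Some d) /\
       match @kra_U _ _ _ A q a with
       | Some j => exists q', @kra_delta _ _ _ A q a j q' /\
                     @kra_accepts_from Sigma D k A q' (reg_update tau j d) w'
       | None => False
       end)
  end.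

Definition kra_accepts (Sigma : finType) (D : eqType) k (A : KRA Sigma D k)
    (w : data_word Sigma D) : Prop :=
  @kra_accepts_from Sigma D k A (kra_q0 A) (@kra_tau0 _ _ _ A) w.

Definition in_L_KRFA (Sigma : finType) (D : eqType) (L : data_language Sigma D) : Prop :=
  exists k : nat, 1 <= k /\
    exists A : KRA Sigma D k, kra_wf A /\ forall w, L w <-> kra_accepts A w.

(* Main.v *)
Require Import Defs.
From mathcomp Require Import all_boot.
From Stdlib Require Import FunctionalExtensionality.

Notation kacc A := (@kra_accepts_from _ _ _ A).
Section Proofs.
Variables (Sigma : finType) (D : countType) (a0 : Sigma).
Hypothesis (Dinf : infinite_type D).

Lemma fresh_list n : forall s : seq D, exists ys : seq D,
  [/\ size ys = n, uniq ys & forall y, y \in ys -> y \notin s].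
Proof.
elim: n => [|n IH] s; first by exists [::].
have [ys [Hs Hu Hy]] := IH s.
have [d Hd] := Dinf (ys ++ s).
rewrite mem_cat negb_or in Hd; case/andP: Hd => Hd1 Hd2.
exists (d :: ys); split => //=; first by rewrite Hs.
  by rewrite Hd1.
by move=> y; rewrite in_cons => /orP [/eqP ->|/Hy].
Qed.

Definition M1 : SAFA_init Sigma D :=
  {| safa_Q := unit; safa_m := 1; safa_q0 := tt; safa_F := predT;
     safa_delta := fun _ _ c o _ => (c == (false, ord0)) && (o == Some ord0);
     safa_init := fun _ => [::] |}.

Lemma M1_acc (w : data_word Sigma D) : forall (S : 'I_1 -> seq D),
  @safa_accepts_from Sigma D M1 tt S w <->
  (uniq (map snd w) /\ forall x, x \in map snd w -> x \notin S ord0).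
Proof.
elim: w => [|[a d] w IH] S /=; first by split.
split.
  case=> [[b i] [o [[] [/andP [/eqP [-> ->] /eqP ->] Hc /IH [Hu Hx]]]]].

  rewrite Hu andbT; split.
    by apply/negP => /Hx; rewrite in_cons eqxx.
  move=> x; rewrite in_cons => /orP [/eqP -> //|/Hx].
  by rewrite in_cons negb_or => /andP [].
case=> /andP [Hd Hu] Hx.
exists (false, ord0), (Some ord0), tt; split => //.
  by apply: Hx; rewrite mem_head.
apply/IH; split => // x Hxw /=; rewrite in_cons negb_or Hx ?in_cons ?Hxw ?orbT //.
by rewrite andbT; apply/eqP => E; move: Hd; rewrite -E Hxw.
Qed.

Lemma kra_split k (A : KRA Sigma D k) (u : data_word Sigma D) : forall q tau w,
  kacc A q tau (u ++ w) ->
  exists q' tau', [/\ kacc A q' tau' w,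
    (forall w', kacc A q' tau' w' -> kacc A q tau (u ++ w')) &
    (forall i x, tau' i = Some x -> tau i = Some x \/ x \in map snd u)].
Proof.
elim: u => [|[a d] u IH] q tau w /=.
  by move=> H; exists q, tau; split => // i x ->; left.
case => [[i [Hi [q' [Hd Hw]]]] | [Hn HU]].
  have [q1 [t1 [H1 H2 H3]]] := IH _ _ _ Hw.
  exists q1, t1; split => //.
    by move=> w' /H2 Hw' /=; left; exists i; split => //; exists q'.
  by move=> j x /H3 [|]; [left | move=> Hx; right; rewrite in_cons Hx orbT].
move: HU; case E: (@kra_U _ _ _ A q a) => [j|] // [q' [Hd Hw]].
have [q1 [t1 [H1 H2 H3]]] := IH _ _ _ Hw.
exists q1, t1; split => //.
  by move=> w' /H2 Hw' /=; right; split => //; exists q'.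
move=> i x /H3 [|]; last by move=> Hx; right; rewrite in_cons Hx orbT.
rewrite /reg_update; case: (i == j) => [[<-]|]; last by left.
by right; rewrite mem_head.
Qed.

Lemma map_snd_a0 (ys : seq D) : map snd [seq (a0, y) | y <- ys] = ys.
Proof. by elim: ys => //= y ys ->. Qed.

Lemma part1 : ~ in_L_KRFA (fun w : data_word Sigma D => uniq (map snd w)).
Proof.
case=> k [_ [A [_ HA]]].
have [ys [Hs Hu _]] := fresh_list k.+1 [::].
set T0 := pmap (kra_tau0 A) (enum 'I_k).
have [d Hd] := Dinf (T0 ++ ys).
rewrite mem_cat negb_or in Hd; case/andP: Hd => HdT Hdy.
set u := [seq (a0, y) | y <- ys].
have : kra_accepts A (u ++ [:: (a0, d)]).
  apply/HA; rewrite /= map_cat map_snd_a0 cat_uniq Hu /= andbT orbF.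
  exact: Hdy.
case/kra_split => q' [tau' [H1 H2 H3]].
have Hnd : forall i, tau' i <> Some d.
  move=> i /H3 [Hi|]; last by rewrite map_snd_a0 (negbTE Hdy).
  move: HdT; rewrite /T0 mem_pmap -Hi map_f //.
  by rewrite mem_enum.
have [y Hy Hny] : exists2 y, y \in ys & forall i, tau' i <> Some y.
  case: (boolP (has (fun y => [forall i, tau' i != Some y]) ys)).
    move/hasP => [y Hy /forallP Hf]; exists y => // i; exact/eqP/Hf.
  move/hasPn => Hall; exfalso.
  have : size (map Some ys) <= size (map tau' (enum 'I_k)).
    apply: uniq_leq_size; first by rewrite map_inj_uniq //; move=> x1 x2 [].
    move=> o /mapP [x Hx ->].
    move: (Hall x Hx); rewrite negb_forall => /existsP [i /negPn /eqP <-].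
    by rewrite map_f // mem_enum.
  by rewrite !size_map -enumT size_enum_ord Hs ltnn.
have : kra_accepts A (u ++ [:: (a0, y)]).
  apply: H2; move: H1 => /= [[i [Hi _]] | [_ HU]]; first by case: (Hnd i).
  right; split => //.
move/HA; rewrite /= map_cat map_snd_a0 cat_uniq /= Hy.
by rewrite andbF.
Qed.

Fixpoint pairsb (w : data_word Sigma D) : bool :=
  match w with
  | [::] => true
  | (_, d) :: (_, e) :: w' => (d == e) && pairsb w'
  | _ => false
  end.

Lemma pairsb_cat_n n : forall p v, size p <= n -> pairsb p -> pairsb (p ++ v) = pairsb v.
Proof.
elim: n => [|n IH] p v; case: p => [|[a d] p] //; case: p => [|[b e] p] //= Hs.
case/andP => -> Hp /=; apply: IH => //.
exact: ltnW.
Qed.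

Lemma pairsb_cat p v : pairsb p -> pairsb (p ++ v) = pairsb v.
Proof. exact: (@pairsb_cat_n (size p)). Qed.

Fixpoint dup (ys : seq D) : data_word Sigma D :=
  if ys is y :: ys' then (a0, y) :: (a0, y) :: dup ys' else [::].

Lemma pairsb_dup ys : pairsb (dup ys).
Proof. by elim: ys => //= y ys ->; rewrite eqxx. Qed.

Lemma mem_dup ys x : (x \in map snd (dup ys)) = (x \in ys).
Proof. by elim: ys => //= y ys IH; rewrite !in_cons IH orbA orbb. Qed.

Definition A2 : KRA Sigma D 1 :=
  {| kra_Q := bool; kra_delta := fun q _ _ q' => q' == ~~ q;
     kra_tau0 := fun _ => None;
     kra_U := fun q _ => if q then Some ord0 else None;
     kra_q0 := true; kra_F := fun q => q |}.

Lemma upd_id (tau : 'I_1 -> option D) d :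
  tau ord0 = Some d -> reg_update tau ord0 d = tau.
Proof.
move=> H; apply: functional_extensionality => i.
by rewrite (ord1 i) /reg_update eqxx H.
Qed.

Lemma A2_true tau a d (w : data_word Sigma D) :
  kacc A2 true tau ((a, d) :: w) <->
  kacc A2 false (reg_update tau ord0 d) w.
Proof.
split => /=.
  case=> [[i [Hi [q' [/eqP -> Hw]]]] | [_ [q' [/eqP -> Hw]]]] //.
  by rewrite (ord1 i) in Hi; rewrite (upd_id _ _ Hi).
move=> Hw; case E: (tau ord0 == Some d).
  left; exists ord0; split; first exact/eqP.
  by exists false; split => //; rewrite -(upd_id _ _ (eqP E)).
right; split.
  by move=> i; rewrite (ord1 i); apply/eqP; rewrite E.
by exists false.
Qed.

Lemma A2_false tau b e (w : data_word Sigma D) :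
  kacc A2 false tau ((b, e) :: w) <->
  (tau ord0 = Some e /\ kacc A2 true tau w).
Proof.
split => /=.
  case=> [[i [Hi [q' [/eqP -> Hw]]]] | [_ []]].
  by rewrite (ord1 i) in Hi.
by case=> Ht Hw; left; exists ord0; split => //; exists true.
Qed.

Lemma A2_acc n : forall (w : data_word Sigma D) tau, size w <= n ->
  (kacc A2 true tau w <-> pairsb w).
Proof.
elim: n => [|n IH] w tau Hs.
  by case: w Hs => // _; split.
case: w Hs => [|[a d] w] Hs; first by split.
case: w Hs => [|[b e] w] Hs.
  by split => // /A2_true.
have Hs' : size w <= n by move: Hs => /= /ltnW.
split.
  move/A2_true/A2_false => [].
  rewrite /reg_update eqxx => [[->]] /(IH _ _ Hs') /= ->.
  by rewrite eqxx.
move=> H; have /andP [/eqP Hde Hp] : (d == e) && pairsb w := H; subst e.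
apply (proj2 (A2_true _ _ _ _)); apply (proj2 (A2_false _ _ _ _)); split; first by rewrite /reg_update eqxx.
exact/(IH _ _ Hs').
Qed.

Lemma part2a : in_L_KRFA (fun w : data_word Sigma D => pairsb w).
Proof.
exists 1; split => //; exists A2; split; first by [].
move=> w; apply: iff_sym; exact: (@A2_acc (size w) w (fun _ => None) (leqnn _)).
Qed.


Lemma part1a : in_L_SAFA_init (fun w : data_word Sigma D => uniq (map snd w)).
Proof.
exists M1 => w; rewrite /safa_accepts /=.
have := M1_acc w (fun _ => [::]).
move=> [H1 H2]; split.
  by move=> Hu; apply: H2; split => // x.
by case/H1.
Qed.

Section SAFA.
Variable M : SAFA_init Sigma D.
Notation m := (safa_m M).
Notation acc := (@safa_accepts_from Sigma D M).

Definition allS (S : 'I_m -> seq D) := flatten [seq S i | i <- enum 'I_m].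

Lemma in_allS S i x : x \in S i -> x \in allS S.
Proof.
move=> H; apply/flattenP; exists (S i) => //.
by apply: map_f; rewrite mem_enum.
Qed.

Lemma allSP S x : x \in allS S -> exists i, x \in S i.
Proof. by case/flattenP => s /mapP [i _ ->] Hx; exists i. Qed.

Definition cnt (S : 'I_m -> seq D) := #|[set i | S i != [::]]|.

Lemma mem_upd (S : 'I_m -> seq D) o d i x :
  (x \in safa_update S o d i) = (x \in S i) || ((o == Some i) && (x == d)).
Proof.
case: o => [j|] /=; last by rewrite orbF.
case: (eqVneq i j) => [->|ne]; first by rewrite eqxx in_cons orbC.
have -> : (Some j == Some i) = false by apply/eqP => [[E]]; move: ne; rewrite E eqxx.
by rewrite orbF.
Qed.

Lemma acc_agree w : forall q S S', acc q S w ->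
  (forall x, x \in map snd w -> forall i, (x \in S i) = (x \in S' i)) -> acc q S' w.
Proof.
elim: w => [|[a d] w IH] q S S' /=; first by [].
case=> [c [o [q' [Hd Hc Hw]]]] Hag.
exists c, o, q'; split => //.
  by move: Hc; rewrite /safa_cond_holds (Hag d (mem_head _ _) c.2).
by apply: IH Hw _ => x Hx i; rewrite !mem_upd (Hag x _ i) // in_cons Hx orbT.
Qed.

Lemma key p q S a b y ws :
  (forall v, acc q S v -> safa_accepts M (p ++ v)) ->
  (forall w, safa_accepts M w -> pairsb w) -> pairsb p ->
  y \notin allS S -> y \notin map snd ws ->
  (forall x, x \in map snd ws -> x \notin allS S) ->
  acc q S ((a, y) :: (b, y) :: ws) ->
  exists q3 S3, [/\ acc q3 S3 ws,
    (forall v, acc q3 S3 v -> safa_accepts M (p ++ (a, y) :: (b, y) :: v)),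
    (forall i x, x \in S3 i -> (x \in S i) || (x == y)),
    (forall i x, x \in S i -> x \in S3 i) & cnt S < cnt S3].
Proof.
move=> Hr HL Hp Hy Hyw Hw /=.
case=> [[cb ci] [o [q1 [Hd1 Hc1 [[cb' h] [o' [q2 [Hd2 Hc2 Hacc]]]]]]]].
have Hrej : forall z x, z != x -> ~ acc q S ((a, z) :: (b, x) :: ws).
  by move=> z x Hzx /Hr /HL; rewrite pairsb_cat //= (negbTE Hzx).
have HnS : forall x i, x \notin allS S -> x \notin S i.
  by move=> x i Hx; apply/negP => /in_allS; rewrite (negbTE Hx).
have Hwx : forall x, x \in map snd ws -> x != y.
  by move=> x Hx; apply/eqP => E; move: Hyw; rewrite -E Hx.
have [z Hz] := Dinf (y :: allS S ++ map snd ws).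
rewrite in_cons mem_cat !negb_or in Hz; case/andP: Hz => Hzy /andP [HzS Hzw].
have Hwz : forall x, x \in map snd ws -> x != z.
  by move=> x Hx; apply/eqP => E; move: Hzw; rewrite -E Hx.
case: cb Hc1 Hd1 => Hc1 Hd1.
  by move: Hc1; rewrite /safa_cond_holds /= (negbTE (HnS _ ci Hy)).
rewrite /safa_cond_holds /= in Hc1.
case: cb' Hc2 Hd2 => Hc2 Hd2; last first.
  exfalso; apply: (Hrej z y Hzy) => /=.
  exists (false, ci), o, q1; split => //.
    by rewrite /safa_cond_holds /= HnS.
  exists (false, h), o', q2; split => //.
    rewrite /safa_cond_holds /= mem_upd negb_or HnS //=.
    by apply/negP => /andP [_ /eqP E]; move: Hzy; rewrite E eqxx.
  apply: acc_agree Hacc _ => x Hx i.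
  by rewrite !mem_upd (negbTE (HnS _ _ (Hw _ Hx))) (negbTE (Hwx _ Hx)) (negbTE (Hwz _ Hx)) !andbF.
rewrite /safa_cond_holds /= mem_upd (negbTE (HnS _ _ Hy)) eqxx andbT /= in Hc2.
have Eh : S h = [::].
  case Eh: (S h) => [|x s] //; exfalso.
  have HxS : x \in allS S by apply: (@in_allS S h x); rewrite Eh mem_head.
  have Hyx : y != x by apply/eqP => E; move: Hy; rewrite E HxS.
  apply: (Hrej y x Hyx) => /=.
  exists (false, ci), o, q1; split => //.
  exists (true, h), o', q2; split => //.
    by rewrite /safa_cond_holds /= mem_upd Eh mem_head.
  apply: acc_agree Hacc _ => x' Hx' i.
  have Hx'x : x' != x by apply/eqP => E; move: (Hw _ Hx'); rewrite E HxS.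
  by rewrite !mem_upd (negbTE (Hwx _ Hx')) (negbTE Hx'x) !andbF.
exists q2, (safa_update (safa_update S o y) o' y); split => //.
- move=> v Hv; apply: Hr => /=.
  exists (false, ci), o, q1; split => //.
  exists (true, h), o', q2; split => //. by rewrite /safa_cond_holds /= mem_upd Hc2 eqxx orbT.
- move=> i x; rewrite !mem_upd.
  by case/orP => [/orP [->|/andP [_ ->]]|/andP [_ ->]]; rewrite ?orbT.
- by move=> i x Hx; rewrite !mem_upd Hx.
apply: proper_card; apply/properP; split.
  apply/subsetP => i; rewrite !inE.
  case E: (S i) => [|x s] // _.
  have : x \in safa_update (safa_update S o y) o' y i by rewrite !mem_upd E mem_head.
  by case: (safa_update _ _ _ i).
exists h; rewrite !inE ?Eh //.
have : y \in safa_update (safa_update S o y) o' y h by rewrite !mem_upd Hc2 eqxx orbT.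
by case: (safa_update _ _ _ h).
Qed.

Lemma countQ ys : forall p q S,
  (forall v, acc q S v -> safa_accepts M (p ++ v)) ->
  (forall w, safa_accepts M w -> pairsb w) -> pairsb p -> uniq ys ->
  (forall y, y \in ys -> y \notin allS S) -> acc q S (dup ys) ->
  cnt S + size ys <= m.
Proof.
elim: ys => [|y ys IH] p q S Hr HL Hp Hu Hys Hacc /=.
  by rewrite addn0; apply: leq_trans (max_card _) _; rewrite card_ord.
case/andP: Hu => Hyn Hu.
have Hy : y \notin allS S by apply: Hys; rewrite mem_head.
have Hyw : y \notin map snd (dup ys) by rewrite mem_dup.
have Hw : forall x, x \in map snd (dup ys) -> x \notin allS S.
  by move=> x; rewrite mem_dup => Hx; apply: Hys; rewrite in_cons Hx orbT.
have [q3 [S3 [H1 H2 H3 H4 H5]]] := @key p q S a0 a0 y (dup ys) Hr HL Hp Hy Hyw Hw Hacc.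
have Hle : cnt S3 + size ys <= m.
  apply: (IH (p ++ [:: (a0, y); (a0, y)]) q3 S3 _ HL _ Hu _ H1).
  - by move=> v /H2; rewrite -catA.
  - by rewrite pairsb_cat //= eqxx.
  move=> y' Hy'; apply/negP => /allSP [i /H3 /orP [HS | /eqP Heq]].
    by move: (Hys y'); rewrite in_cons Hy' orbT => /(_ isT); rewrite (in_allS _ _ _ HS).
  by move: Hyn; rewrite -Heq Hy'.
rewrite addnS; apply: (leq_trans _ Hle).
by rewrite -addSn leq_add2r.
Qed.

End SAFA.

Lemma part2b : ~ in_L_SAFA_init (fun w : data_word Sigma D => pairsb w).
Proof.
case=> M HM.
have HL : forall w, safa_accepts M w -> pairsb w by move=> w /HM.
have [ys [Hs Hu Hys]] := fresh_list (safa_m M).+1 (allS M (@safa_init _ _ M)).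
have := @countQ M ys [::] (safa_q0 M) (@safa_init _ _ M) (fun v H => H) HL isT Hu Hys.
have Hacc : safa_accepts M (dup ys) by apply/HM; exact: pairsb_dup.
move=> /(_ Hacc); rewrite Hs addnS ltnNge.
by rewrite leq_addl.
Qed.

End Proofs.

Theorem theorem16 (Sigma : finType) (D : countType) (a0 : Sigma)
    (Dinf : infinite_type D) :
  (exists L : data_language Sigma D, in_L_SAFA_init L /\ ~ in_L_KRFA L) /\
  (exists L : data_language Sigma D, in_L_KRFA L /\ ~ in_L_SAFA_init L).
Proof.
split.
  exists (fun w : data_word Sigma D => uniq (map snd w)); split.
    exact: part1a.
  exact: part1.
exists (fun w : data_word Sigma D => @pairsb Sigma D w); split.
  exact: part2a.
exact: part2b.
Qed.
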